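(* Consider the random pairwise load balancing process on $n\ge 2$ nodes with initial load vector $\ell(0)\in\mathbb{N}_0^n$ and initial discrepancy $\Delta=\max_i\ell_i(0)-\min_i\ell_i(0)\ge 1$. Let $T_1$ be the first time step $t$ with $\Phi(\ell(t)) < n$. Then with high probability (probability $1-O(1/n)$), $T_1 = O(n\log n + n\log\Delta)$, with an absolute constant in the $O(\cdot)$.
   Context: Random pairwise load balancing process: $n$ nodes (complete graph), $m$ indistinguishable tokens. The load vector at time $t\in\mathbb{N}_0$ is $\ell(t)=(\ell_1(t),\dots,\ell_n(t))$, $\ell_i(t)$ the number of tokens at node $i$. In each time step $t$, independently of everything before, an ordered pair $(u,v)$ of distinct nodes is chosen uniformly at random, and the loads are updated to $\ell_u(t+1)=\lceil(\ell_u(t)+\ell_v(t))/2\rceil$, $\ell_v(t+1)=\lfloor(\ell_u(t)+\ell_v(t))/2\rfloor$; other loads unchanged. The average load is $\varnothing=m/n$. The potential of a load vector $\ell$ is $\Phi(\ell)=\sum_{i=1}^n(\ell_i-\varnothing)^2$. *)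

(* Defs.v *)
From HB Require Import structures.
From mathcomp Require Import all_boot all_order all_algebra.
Set Implicit Arguments. Unset Strict Implicit. Unset Printing Implicit Defensive.
Import Order.TTheory GRing.Theory Num.Theory.

Definition load (n : nat) := {ffun 'I_n -> nat}.

Definition tokens n (l : load n) : nat := \sum_(i < n) l i.

Definition Phi n (l : load n) : rat :=
  (\sum_(i < n) (((l i)%:R - (tokens l)%:R / n%:R) ^+ 2))%R.

Definition disc n (l : load n) : nat :=
  \max_(i < n) l i - \big[minn/(\max_(i < n) l i)]_(i < n) l i.

Definition step n (l : load n) (p : 'I_n * 'I_n) : load n :=
  let: (u, v) := p in
  [ffun i => if i == u then uphalf (l u + l v)
             else if i == v then (l u + l v)./2 else l i].

Definition loads_after n (l0 : load n) (s : seq ('I_n * 'I_n)) (k : nat) : load n :=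
  foldl (@step n) l0 (take k s).

Definition admissible n (s : seq ('I_n * 'I_n)) : bool :=
  all (fun p : 'I_n * 'I_n => p.1 != p.2) s.

Definition T1_gt n (l0 : load n) t (s : t.-tuple ('I_n * 'I_n)) : bool :=
  [forall k : 'I_t.+1, (n%:R <= Phi (loads_after l0 s k))%R].

(* Pr[T_1 > t]: the t choices are i.i.d. uniform ordered pairs of distinct
   nodes, i.e. the uniform distribution on admissible t-tuples. *)
Definition prob_T1_gt n (l0 : load n) (t : nat) : rat :=
  (#|[set s : t.-tuple ('I_n * 'I_n) | admissible s && T1_gt l0 s]|%:R
   / #|[set s : t.-tuple ('I_n * 'I_n) | admissible s]|%:R)%R.

(* Main.v *)
Require Import Defs.
From HB Require Import structures.
From mathcomp Require Import all_boot all_order all_algebra.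
From mathcomp Require Import ring lra zify.
Import Order.TTheory GRing.Theory Num.Theory.
Set Implicit Arguments. Unset Strict Implicit.
Local Open Scope ring_scope.

Lemma sq_sum n (x : 'I_n -> rat) (a : rat) :
  \sum_(i < n) (x i - a) ^+ 2 =
  \sum_(i < n) x i ^+ 2 - 2 * a * (\sum_(i < n) x i) + n%:R * a ^+ 2.
Proof.
rewrite (eq_bigr (fun i => x i ^+ 2 - 2 * a * x i + a ^+ 2)); last by move=> i _; ring.
rewrite big_split /= sumrB -mulr_sumr sumr_const card_ord.
by congr (_ + _); rewrite mulr_natl.
Qed.

Lemma tokensE n (l : load n) : (tokens l)%:R = \sum_(i < n) ((l i)%:R : rat).
Proof. by rewrite /tokens natr_sum. Qed.

Lemma Phi_shift n (l : load n) (a : rat) : (0 < n)%N ->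
  \sum_(i < n) ((l i)%:R - a) ^+ 2 =
  Phi l + n%:R * ((tokens l)%:R / n%:R - a) ^+ 2.
Proof.
move=> n0; rewrite /Phi !sq_sum -tokensE.
have nz : (n%:R : rat) != 0 by rewrite pnatr_eq0 -lt0n.
set m := (tokens l)%:R : rat; set S := \sum_(i < n) _.
field; exact nz.
Qed.

Lemma Phi_ge0 n (l : load n) : 0 <= Phi l.
Proof. by apply: sumr_ge0 => i _; apply: sqr_ge0. Qed.

Lemma Phi_alt n (l : load n) : (0 < n)%N ->
  Phi l = \sum_(i < n) ((l i)%:R : rat) ^+ 2 - (tokens l)%:R ^+ 2 / n%:R.
Proof.
move=> n0; have := Phi_shift l 0 n0; rewrite (eq_bigr (fun i => ((l i)%:R : rat) ^+ 2)); last by move=> i _; rewrite subr0.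
move=> ->.
have nz : (n%:R : rat) != 0 by rewrite pnatr_eq0 -lt0n.
rewrite subr0; field; exact nz.
Qed.

Lemma sum_step n (l : load n) u v (g : nat -> rat) : u != v ->
  \sum_(i < n) g (step l (u, v) i) + g (l u) + g (l v) =
  \sum_(i < n) g (l i) + g (uphalf (l u + l v)) + g ((l u + l v)./2).
Proof.
move=> uv.
rewrite (bigD1 u) //= (bigD1 v) //=; last by rewrite eq_sym.
rewrite [in RHS](bigD1 u) //= [in RHS](bigD1 v) //=; last by rewrite eq_sym.
have vu : (v == u) = false by apply/negbTE; rewrite eq_sym.
rewrite !ffunE eqxx vu eqxx.
have -> : \sum_(i < n | (i != u) && (i != v)) g (step l (u, v) i) =
          \sum_(i < n | (i != u) && (i != v)) g (l i).
  by apply: eq_bigr => i /andP [/negbTE iu /negbTE iv]; rewrite ffunE iu iv.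
lra.
Qed.

Lemma half_sum S : (uphalf S + S./2 = S)%N.
Proof. by rewrite uphalf_half -addnA addnn odd_double_half. Qed.

Lemma Phi_step n (l : load n) u v : (0 < n)%N -> u != v ->
  Phi (step l (u, v)) <= Phi l + 1 / 2 - ((l u)%:R - (l v)%:R) ^+ 2 / 2.
Proof.
move=> n0 uv.
have tok : ((tokens (step l (u, v)))%:R : rat) = (tokens l)%:R.
  rewrite !tokensE; have := sum_step l (fun k => (k%:R : rat)) uv.
  have e : ((uphalf (l u + l v))%:R + ((l u + l v)./2)%:R : rat) = (l u)%:R + (l v)%:R by rewrite -natrD half_sum natrD.
  lra.
rewrite !Phi_alt // tok.
have := sum_step l (fun k => (k%:R : rat) ^+ 2) uv.
set S := (l u + l v)%N.
have hS : (odd S + S./2 * 2 = S)%N by rewrite muln2 odd_double_half.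
have ho : uphalf S = (odd S + S./2)%N by rewrite uphalf_half.
have o1 : ((odd S)%:R : rat) * (odd S)%:R = (odd S)%:R by case: (odd S); rewrite ?mulr0 ?mulr1.
have o2 : 0 <= ((odd S)%:R : rat) <= 1 by case: (odd S); rewrite /= ?lexx ?ler01.
move: hS => /(congr1 (fun k => (k%:R : rat))).
rewrite ho !natrD natrM.

set o := ((odd _)%:R : rat) in o1 o2 *.
set f := ((_ ./2)%:R : rat).
set a := ((l u)%:R : rat); set b := ((l v)%:R : rat).
move=> hab heq.
nra.
Qed.

Definition npairs n : rat := \sum_(p : 'I_n * 'I_n | p.1 != p.2) 1.

Lemma npairsE n : npairs n = (n * n.-1)%:R.
Proof.
rewrite /npairs (eq_bigl (fun p : 'I_n * 'I_n => xpredT p.1 && (p.2 != p.1))); last first.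
  by move=> p; rewrite /= eq_sym.
rewrite -(pair_big_dep xpredT (fun u v => v != u) (fun _ _ => (1 : rat))) /=.
rewrite (eq_bigr (fun _ => (n.-1)%:R)); last first.
  move=> u _; rewrite (eq_bigl (predC1 u)) // sumr_const cardC1 card_ord.
  by [].
by rewrite sumr_const card_ord natrM mulrC mulr_natr.
Qed.

Lemma sum_diff n (l : load n) : (0 < n)%N ->
  \sum_(p : 'I_n * 'I_n | p.1 != p.2) (((l p.1)%:R : rat) - (l p.2)%:R) ^+ 2
  = 2 * n%:R * Phi l.
Proof.
move=> n0.
rewrite big_mkcond /=.
rewrite (eq_bigr (fun p : 'I_n * 'I_n => (((l p.1)%:R : rat) - (l p.2)%:R) ^+ 2)); last first.
  by move=> p _; case: eqP => [->|//]; rewrite subrr expr0n.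
rewrite -(pair_bigA _ (fun u v => (((l u)%:R : rat) - (l v)%:R) ^+ 2)) /=.
set X := \sum_(i < n) ((l i)%:R : rat) ^+ 2.
set M := \sum_(i < n) ((l i)%:R : rat).
rewrite (eq_bigr (fun u => X - 2 * (l u)%:R * M + n%:R * (l u)%:R ^+ 2)); last first.
  move=> u _; rewrite -sq_sum; apply: eq_bigr => v _; ring.
rewrite big_split /= sumrB -mulr_suml -!mulr_sumr sumr_const card_ord.
rewrite Phi_alt // tokensE -/M -/X.
have nz : (n%:R : rat) != 0 by rewrite pnatr_eq0 -lt0n.
rewrite -mulr_natl; field; exact nz.
Qed.

Definition q n : rat := 1 - (2 * n)%:R^-1.

Lemma sum_step_Phi n (l : load n) : (2 <= n)%N -> n%:R <= Phi l ->
  \sum_(p : 'I_n * 'I_n | p.1 != p.2) Phi (step l p) <= npairs n * q n * Phi l.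
Proof.
move=> n2 hP.
have n0 : (0 < n)%N by apply: leq_trans n2.
apply: le_trans (_ : \sum_(p : 'I_n * 'I_n | p.1 != p.2)
   (Phi l + 1 / 2 - (((l p.1)%:R : rat) - (l p.2)%:R) ^+ 2 / 2) <= _).
  by apply: ler_sum => -[u v] /= uv; apply: Phi_step.
rewrite sumrB -mulr_suml sum_diff //.
have -> : \sum_(p : 'I_n * 'I_n | p.1 != p.2) (Phi l + 1 / 2) = (Phi l + 1/2) * npairs n.
  by rewrite /npairs mulr_sumr; apply: eq_bigr => p _; rewrite mulr1.
rewrite npairsE /q natrM.
have -> : (n.-1)%:R = (n%:R - 1 : rat).
  by rewrite -{2}(prednK n0) -addn1 natrD addrK.
have r2 : (2 : rat) <= n%:R by rewrite (ler_nat _ 2 n).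
set r := (n%:R : rat) in r2 hP *.
rewrite natrM invfM -/r.
have h : r * (r - 1) * (2^-1 * r^-1) = (r - 1) / 2.
  have rp : 0 < r by lra.
  by field; rewrite gt_eqF.
have e : r * (r - 1) * (1 - 2^-1 * r^-1) * Phi l = r * (r - 1) * Phi l - (r - 1) / 2 * Phi l.
  by rewrite mulrBr mulr1 h mulrBl.
rewrite e.
nra.
Qed.

Lemma sum_tupleS (T : finType) t (F : seq T -> rat) :
  \sum_(s : t.+1.-tuple T) F s = \sum_(x : T) \sum_(s : t.-tuple T) F (x :: s).
Proof.
rewrite pair_bigA /=.
rewrite (reindex (fun p : T * t.-tuple T => [tuple of p.1 :: p.2])) //=.
exists (fun s : t.+1.-tuple T => (thead s, [tuple of behead s])).
  by move=> [x s] _ /=; rewrite theadE; congr pair; apply: val_inj.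
by move=> s _ /=; rewrite [RHS]tuple_eta.
Qed.

Fixpoint good n (l0 : load n) (s : seq ('I_n * 'I_n)) : bool :=
  match s with
  | [::] => (n%:R <= Phi l0)
  | p :: s' => (n%:R <= Phi l0) && good (step l0 p) s'
  end.

Lemma good_of n (s : seq ('I_n * 'I_n)) : forall l0 : load n,
  (forall k, (k <= size s)%N -> n%:R <= Phi (foldl (@step n) l0 (take k s))) ->
  good l0 s.
Proof.
elim: s => [|p s IH] l0 H /=.
  exact: (H 0%N).
apply/andP; split; first exact: (H 0%N).
apply: IH => k hk; exact: (H k.+1).
Qed.

Lemma T1_good n (l0 : load n) t (s : t.-tuple ('I_n * 'I_n)) :
  T1_gt l0 s -> good l0 s.
Proof.
move=> /forallP H; apply: good_of => k hk.
rewrite size_tuple in hk.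
exact: (H (Ordinal (hk : (k < t.+1)%N))).
Qed.

Lemma q_ge0 n : 0 <= q n.
Proof.
rewrite /q subr_ge0; case: n => [|n]; first by rewrite muln0 invr0 ler01.
rewrite invf_le1 ?ler1n ?ltr0n //; lia.
Qed.

Lemma key n t : (2 <= n)%N -> forall l0 : load n,
  \sum_(s : t.-tuple ('I_n * 'I_n))
     (if admissible s && good l0 s then Phi (foldl (@step n) l0 s) else 0)
  <= (\sum_(s : t.-tuple ('I_n * 'I_n)) (if admissible s then 1 else 0))
       * q n ^+ t * Phi l0.
Proof.
move=> n2; elim: t => [|t IH] l0.
  rewrite expr0 mulr1 mulr_suml; apply: ler_sum => s _.
  have -> : tval s = [::] by apply: size0nil; rewrite size_tuple.
  have := Phi_ge0 l0.
  by case: (admissible _); case: (good _ _) => /= h; rewrite ?mul1r ?mul0r.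
rewrite (sum_tupleS t (fun s => if admissible s && good l0 s then Phi (foldl (@step n) l0 s) else 0)).
rewrite (sum_tupleS t (fun s => if admissible s then (1 : rat) else 0)).
set A := \sum_(s : t.-tuple ('I_n * 'I_n)) (if admissible s then (1 : rat) else 0).
have A0 : 0 <= A by apply: sumr_ge0 => s _; case: (admissible _).
have hR : \sum_(x : 'I_n * 'I_n) \sum_(s : t.-tuple ('I_n * 'I_n))
     (if admissible (x :: s) then (1 : rat) else 0) = npairs n * A.
  rewrite /npairs mulr_suml [RHS]big_mkcond /=; apply: eq_bigr => x _.
  case e: (x.1 != x.2) => /=.
    by rewrite mul1r; apply: eq_bigr => s _; rewrite /admissible /= ?e.
  by rewrite big1 // => s _; rewrite /admissible /= ?e.
rewrite hR.
case hP : (n%:R <= Phi l0); last first.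
  rewrite big1; last first.
    by move=> x _; rewrite big1 // => s _; rewrite /= hP andbF.
  apply: mulr_ge0; last exact: Phi_ge0.
  apply: mulr_ge0; last by apply: exprn_ge0; apply: q_ge0.
  by apply: mulr_ge0 => //; rewrite /npairs; apply: sumr_ge0.
have hL : \sum_(x : 'I_n * 'I_n) \sum_(s : t.-tuple ('I_n * 'I_n))
   (if admissible (x :: s) && good l0 (x :: s) then Phi (foldl (@step n) l0 (x :: s)) else 0)
   = \sum_(x : 'I_n * 'I_n) (if x.1 != x.2 then \sum_(s : t.-tuple ('I_n * 'I_n))
   (if admissible s && good (step l0 x) s then Phi (foldl (@step n) (step l0 x) s) else 0) else 0).
  apply: eq_bigr => x _.
  case e: (x.1 != x.2) => /=.
    by apply: eq_bigr => s _; rewrite /admissible /= ?e hP.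
  by rewrite big1 // => s _; rewrite /admissible /= ?e.
rewrite hL.
apply: le_trans (_ : \sum_(x : 'I_n * 'I_n)
   (if x.1 != x.2 then A * q n ^+ t * Phi (step l0 x) else 0) <= _).
  apply: ler_sum => x _.
  case: ifP => // e.
rewrite -big_mkcond /= -mulr_sumr.
have hq : 0 <= A * q n ^+ t by apply: mulr_ge0 => //; apply: exprn_ge0; apply: q_ge0.
apply: le_trans (_ : A * q n ^+ t * (npairs n * q n * Phi l0) <= _).
  by apply: ler_wpM2l => //; apply: sum_step_Phi.
have -> : npairs n * A * q n ^+ t.+1 * Phi l0 = A * q n ^+ t * (npairs n * q n * Phi l0) by rewrite exprS; ring.
by [].
Qed.

Lemma card_sum (T : finType) (P : pred T) :
  (#|[set s | P s]|%:R : rat) = \sum_s (if P s then 1 else 0).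
Proof. by rewrite -sum1dep_card natr_sum big_mkcond. Qed.

Lemma prob_bound n (l0 : load n) t : (2 <= n)%N ->
  prob_T1_gt l0 t <= q n ^+ t * Phi l0 / n%:R.
Proof.
move=> n2.
have n0 : (0 < n)%N by apply: leq_trans n2.
have np : (0 : rat) < n%:R by rewrite ltr0n.
rewrite /prob_T1_gt !card_sum.
set C := \sum_s _; set D := \sum_s _.
have D0 : 0 <= D by apply: sumr_ge0 => s _; case: (admissible _).
have X0 : 0 <= q n ^+ t * Phi l0 / n%:R.
  by apply: divr_ge0; [apply: mulr_ge0; [apply: exprn_ge0; apply: q_ge0|apply: Phi_ge0]|apply: ltW].
have hC : n%:R * C <= D * q n ^+ t * Phi l0.
  apply: le_trans (key t n2 l0).
  rewrite /C mulr_sumr; apply: ler_sum => s _.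
  case hA : (admissible s) => /=; last by rewrite mulr0.
  case hT : (T1_gt l0 s); last by rewrite mulr0; case: (good _ _) => //; apply: Phi_ge0.
  rewrite (T1_good hT) mulr1.
  move/forallP: hT => /(_ ord_max) /=.
  by rewrite /loads_after take_oversize // size_tuple.
case: (ltrgt0P D) => [Dp|Dn|->]; last by rewrite invr0 mulr0.
  rewrite ler_pdivrMr // mulrAC ler_pdivlMr // mulrC; apply: (le_trans hC).
  by rewrite le_eqVlt; apply/orP; left; apply/eqP; ring.

by move: Dn; rewrite ltNge D0.
Qed.

Lemma bern (x : rat) k : 0 <= x -> x <= 1 -> (1 - x) ^+ k * (1 + k%:R * x) <= 1.
Proof.
move=> x0 x1; elim: k => [|k IH]; first by rewrite expr0 mul0r addr0 mulr1.
have y0 : 0 <= (1 - x) ^+ k by apply: exprn_ge0; lra.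
set y := (1 - x) ^+ k in IH y0 *.
have k0 : (0 : rat) <= k%:R by apply: ler0n.
have h : 0 <= y * (x * x) * (k%:R + 1) by apply: mulr_ge0; [apply: mulr_ge0 => //; nra|lra].
rewrite exprS -natr1 /y.
have -> : (1 - x) * (1 - x) ^+ k * (1 + (k%:R + 1) * x) =
   y * (1 + k%:R * x) - y * (x * x) * (k%:R + 1) by rewrite /y; ring.
lra.
Qed.

Lemma q_pow n : (0 < n)%N -> 2 * q n ^+ (2 * n) <= 1.
Proof.
move=> n0.
have np : (0 : rat) < (2 * n)%:R by rewrite ltr0n muln_gt0.
have := bern (2 * n) (_ : 0 <= (2 * n)%:R^-1) (_ : (2 * n)%:R^-1 <= 1).
rewrite mulfV ?gt_eqF // /q.
have -> : (1 + 1 : rat) = 2 by [].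
rewrite mulrC; apply.
  by rewrite invr_ge0 ltW.
by rewrite invf_le1 // ler1n muln_gt0.
Qed.

Lemma bigmin_le (I : eqType) (r : seq I) (d : nat) (F : I -> nat) i :
  i \in r -> (\big[minn/d]_(j <- r) F j <= F i)%N.
Proof.
elim: r => [//|x r IH]; rewrite inE big_cons => /orP [/eqP ->|/IH h].
  exact: geq_minl.
by apply: leq_trans h; apply: geq_minr.
Qed.

Lemma Phi_disc n (l : load n) : (0 < n)%N -> Phi l <= n%:R * ((disc l)%:R) ^+ 2.
Proof.
move=> n0.
set mx := \max_(i < n) l i.
set mn := \big[minn/mx]_(i < n) l i.
have hmn : forall i, (mn <= l i)%N by move=> i; apply: bigmin_le; apply: mem_index_enum.
have hmx : forall i, (l i <= mx)%N by move=> i; apply: leq_bigmax.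
have := Phi_shift l (mn%:R) n0.
have hsq : 0 <= n%:R * ((tokens l)%:R / n%:R - mn%:R) ^+ 2 :> rat.
  by apply: mulr_ge0; [apply: ler0n|apply: sqr_ge0].
move=> e.
apply: le_trans (_ : \sum_(i < n) (((l i)%:R : rat) - mn%:R) ^+ 2 <= _).
  rewrite e; lra.
apply: le_trans (_ : \sum_(i < n) ((disc l)%:R : rat) ^+ 2 <= _).
  apply: ler_sum => i _.
  have a0 : (0 : rat) <= (l i)%:R - mn%:R by rewrite subr_ge0 ler_nat.
  have a1 : ((l i)%:R : rat) - mn%:R <= (disc l)%:R.
    rewrite /disc -/mx -/mn natrB; last exact: leq_trans (hmn i) (hmx i).
    by rewrite lerD2r ler_nat.
  nra.
by rewrite sumr_const card_ord mulr_natl.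
Qed.

Theorem lemma2 :
  exists C c : nat,
  forall (n : nat) (l0 : load n),
    (2 <= n)%N -> (1 <= disc l0)%N ->
    (prob_T1_gt l0 (C * (n * trunc_log 2 n + n * trunc_log 2 (disc l0))) 
       <= c%:R / n%:R)%R.
Proof.
exists 8%N, 1%N => n l0 n2 d1.
have n0 : (0 < n)%N by apply: leq_trans n2.
have np : (0 : rat) < n%:R by rewrite ltr0n.
set a := trunc_log 2 n; set b := trunc_log 2 (disc l0).
have a1 : (0 < a)%N by rewrite /a trunc_log_gt0.
set t := (8 * (n * a + n * b))%N.
apply: le_trans (prob_bound l0 t n2) _.
rewrite ler_pM2r ?invr_gt0 //.
set j := (a + 1 + 2 * (b + 1))%N.
have tj : (2 * n * j <= t)%N by rewrite /t /j; nia.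
have q0 := q_ge0 n.
have q1 : q n <= 1 by rewrite /q; rewrite lerBlDr lerDl invr_ge0 ler0n.
have h1 : q n ^+ t <= q n ^+ (2 * n * j)%N by apply: ler_wiXn2l.
have hn : (n < 2 ^ (a + 1))%N by rewrite addn1; apply: trunc_log_ltn.
have hd : (disc l0 < 2 ^ (b + 1))%N by rewrite addn1; apply: trunc_log_ltn.
have hP : Phi l0 <= ((2 ^ j)%N)%:R.
  apply: le_trans (Phi_disc l0 n0) _.
  rewrite -natrX -natrM ler_nat /j.
  move: hn hd; set P := (2 ^ (a + 1))%N; set Q := (2 ^ (b + 1))%N => hn hd.
  have e : (2 ^ (a + 1 + 2 * (b + 1)) = P * (Q * Q))%N.
    rewrite /P /Q -!expnD; congr expn; lia.
  rewrite e; apply: leq_mul; first exact: ltnW.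
  by rewrite expnS expn1; apply: leq_mul; apply: ltnW.
have hq2 := q_pow n0.
have key2 : q n ^+ t * Phi l0 <= 1.
  apply: le_trans (_ : q n ^+ (2 * n * j)%N * ((2 ^ j)%N)%:R <= _).
    apply: ler_pM => //; [exact: exprn_ge0 q0 | exact: Phi_ge0].
  rewrite natrX exprM -exprMn mulrC; apply: exprn_ile1.
    by apply: mulr_ge0 => //; apply: exprn_ge0.
  by [].
exact: key2.
Qed.
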